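(* Let $k\ge 4$, $n=2k-1$, $\eta=(\eta_1<\dots<\eta_l)\in\mathbb{D}_k\setminus\{(3,k-3)\}$, and let $Y_{2\eta^*}$ be the Young diagram whose main diagonal consists of exactly the cells $c_{1,1},\dots,c_{l+1,l+1}$ and which satisfies $h_{1,1}=2n-4$, $h_{i,i}=2\eta_{l-(i-2)}$ for $2\le i\le l+1$, and $a(c_{i,i})=l(c_{i,i})+1$ for $1\le i\le l+1$. Let $\lambda$ be the partition whose parts are the hook lengths of the cells of the first column of $Y_{2\eta^*}$. Then $\lambda$ is a partition of $T_n=n(n+1)/2$.
   Context: $\mathbb{D}_N$ is the set of partitions of $N$ into distinct parts, i.e. sequences $(\lambda_1<\dots<\lambda_t)$ of positive integers with sum $N$ and $t\ge 2$. Young diagrams are in English convention: rows top to bottom, columns left to right, $c_{i,j}$ the cell in row $i$, column $j$; arm $a(c_{i,j})$ = number of cells to its right in its row, leg $l(c_{i,j})$ = number of cells below it in its column, hook length $h_{i,j}=a+l+1$. (The hook lengths of the first-column cells of a Young diagram are pairwise distinct; the resulting partition is the complement in $\mathbb{N}_0$ of the numerical set corresponding to the diagram under the Keith–Nath transformation.) *)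

(* Defs.v *)
From mathcomp Require Import all_boot.
Set Implicit Arguments. Unset Strict Implicit. Unset Printing Implicit Defensive.

Definition distinct_partition (N : nat) (eta : seq nat) : bool :=
  [&& sorted ltn eta, all (fun x => 0 < x) eta, sumn eta == N & 2 <= size eta].

(* 1-indexed part of an increasing sequence: part eta m = eta_m. *)
Definition part (eta : seq nat) (m : nat) : nat := nth 0 eta m.-1.

(* A Young diagram (English convention) is given by its row lengths from
   top to bottom: a weakly decreasing sequence of positive integers. *)
Definition young (s : seq nat) : bool :=
  sorted geq s && all (fun r => 0 < r) s.

(* length of row i (1-indexed); 0 if no such row *)
Definition row (s : seq nat) (i : nat) : nat := nth 0 s i.-1.
Definition col (s : seq nat) (j : nat) : nat := count (fun r => j <= r) s.
Definition in_diagram (s : seq nat) (i j : nat) : bool :=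
  [&& 1 <= i, 1 <= j, i <= size s & j <= row s i].
Definition arm (s : seq nat) (i j : nat) : nat := row s i - j.
Definition leg (s : seq nat) (i j : nat) : nat := col s j - i.
Definition hook (s : seq nat) (i j : nat) : nat := arm s i j + leg s i j + 1.

Definition first_column_hooks (s : seq nat) : seq nat :=
  [seq hook s i 1 | i <- iota 1 (size s)].

(* Main.v *)
Require Import Defs.
From mathcomp Require Import all_boot zify.

Lemma sum_nth_take (s : seq nat) n :
  \sum_(0 <= i < n) nth 0 s i = sumn (take n s).
Proof.
elim: n s => [|n IH] s; first by rewrite big_geq // take0.
case: s => [|x s] /=.
  by rewrite big1 // => i _; rewrite nth_nil.
by rewrite big_nat_recl // -IH.
Qed.

Lemma sum_ind_min x d : \sum_(1 <= i < d.+1) (i <= x) = minn x d.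
Proof.
elim: d => [|d IH]; first by rewrite big_geq //; lia.
rewrite big_nat_recr //= IH; lia.
Qed.

Lemma sum_count_le (t : seq nat) d : all (fun x => x <= d) t ->
  \sum_(1 <= i < d.+1) count (fun r => i <= r) t = sumn t.
Proof.
elim: t => [|x t IH] /=; first by rewrite big1.
move=> /andP [hx ht]; rewrite big_split /= IH // sum_ind_min; lia.
Qed.

Lemma sum_odd d : \sum_(1 <= i < d.+1) (2 * i - 1) = d * d.
Proof.
elim: d => [|d IH]; first by rewrite big_geq // take0.
rewrite big_nat_recr //= IH; lia.
Qed.

Lemma young_nth (Y : seq nat) i j : young Y -> i <= j -> j < size Y ->
  nth 0 Y j <= nth 0 Y i.
Proof.
move=> /andP [hs _] hij hj.
have tr : transitive (T:=nat) geq by move=> a b c h1 h2; exact: leq_trans h2 h1.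
have := sorted_leq_nth tr (fun x => leqnn x) 0 hs; apply => //.
  rewrite inE; exact: leq_ltn_trans hj.
Qed.

Lemma young_pos (Y : seq nat) x : young Y -> x \in Y -> 0 < x.
Proof. by move=> /andP [_ /allP]; apply. Qed.

Lemma first_col (Y : seq nat) : young Y ->
  sumn (first_column_hooks Y) = sumn Y + \sum_(0 <= i < size Y) i.
Proof.
move=> hY.
have hc : col Y 1 = size Y.
  rewrite /col; apply/eqP; rewrite -all_count; apply/allP => x hx.
  exact: @young_pos Y _ hY hx.
rewrite /first_column_hooks sumnE big_map.
have -> : iota 1 (size Y) = index_iota 1 (size Y).+1 by rewrite /index_iota subSS subn0.
rewrite (eq_big_nat _ _ (F2 := fun i => nth 0 Y i.-1 + (size Y - i))); last first.
  move=> i /andP [h1 h2]; rewrite /hook /arm /leg hc /row.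
  have hi : i.-1 < size Y by lia.
  have := @young_pos Y _ hY (mem_nth 0 hi).
  move: (nth 0 Y i.-1) => x hp; lia.
rewrite big_split /= !big_add1 /=; congr (_ + _).
  by rewrite sum_nth_take take_size.
rewrite big_nat_rev /=; apply: eq_big_nat => i hi; lia.
Qed.

Lemma diag_sum (Y : seq nat) d : young Y -> 1 <= d -> d <= size Y ->
  d <= row Y d -> (d < size Y -> row Y d.+1 <= d) ->
  \sum_(1 <= i < d.+1) hook Y i i = sumn Y.
Proof.
move=> hY hd1 hdY hdd hnext.
have hA : forall i, 1 <= i <= d -> d <= row Y i.
  move=> i hi; apply: (leq_trans hdd); rewrite /row; apply: young_nth => //; lia.
have hB : all (fun x => x <= d) (drop d Y).
  apply/(all_nthP 0) => j hj; rewrite nth_drop.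
  rewrite size_drop in hj.
  have hd : d < size Y by move: hj; change (j < size Y - d -> d < size Y); lia.
  have := hnext hd; rewrite /row /= => h.
  apply: leq_trans h; apply: young_nth => //; lia.
have hC : forall i, 1 <= i <= d -> col Y i = d + count (fun r => i <= r) (drop d Y).
  move=> i hi; rewrite /col -{1}(cat_take_drop d Y) count_cat; congr (_ + _).
  have -> : count (fun r => i <= r) (take d Y) = size (take d Y).
    apply/eqP; rewrite -all_count; apply/(all_nthP 0) => j hj.
    rewrite size_takel // in hj; rewrite nth_take //.
    have hj1 : 1 <= j.+1 <= d by lia.
    have := hA j.+1 hj1; rewrite /row /=; lia.
  by rewrite size_takel.
have hsum : \sum_(1 <= i < d.+1) hook Y i i + \sum_(1 <= i < d.+1) (2 * i - 1) =
   \sum_(1 <= i < d.+1) row Y i + \sum_(1 <= i < d.+1) col Y i.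
  rewrite -!big_split /=; apply: eq_big_nat => i hi.
  have h1 := hA i hi; have h2 := hC i hi; rewrite /hook /arm /leg; lia.
move: hsum; rewrite sum_odd.
rewrite (eq_big_nat _ _ (F1 := col Y) (F2 := fun i => d + count (fun r => i <= r) (drop d Y))); last first.
  by move=> i hi; apply: hC; lia.
rewrite [X in _ = _ + X]big_split /= sum_count_le // [\sum_(1 <= i < d.+1) row Y i]big_add1 /= sum_nth_take.
rewrite big_const_nat iter_addn_0 subSS subn0.
move=> h; have e := cat_take_drop d Y; have e2 : sumn Y = sumn (take d Y) + sumn (drop d Y) by rewrite -sumn_cat e. lia.
Qed.

Theorem proposition3p21 (k : nat) (eta : seq nat) (Y : seq nat) :
  4 <= k ->
  distinct_partition k eta ->
  eta != [:: 3; k - 3] ->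
  young Y ->
  (forall i, 1 <= i -> in_diagram Y i i = (i <= (size eta).+1)) ->
  hook Y 1 1 = 2 * (2 * k - 1) - 4 ->
  (forall i, 2 <= i <= (size eta).+1 ->
     hook Y i i = 2 * part eta (size eta - (i - 2))) ->
  (forall i, 1 <= i <= (size eta).+1 -> arm Y i i = leg Y i i + 1) ->
  sumn (first_column_hooks Y) = (2 * k - 1) * (2 * k - 1).+1 %/ 2.
Proof.
move=> hk heta _ hY hdiag h11 hii harm.
set l := size eta.
have hsum : sumn eta = k by case/and4P: heta => _ _ /eqP.
have hd := hdiag l.+1 isT; rewrite leqnn /in_diagram /= in hd.
have hd' := hdiag l.+2 isT; rewrite ltnn /in_diagram /= in hd'.
case/andP: hd => hdY hdd.
have hnext : l.+1 < size Y -> row Y l.+2 <= l.+1.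
  move=> h; move: hd'; rewrite h /=; lia.
have hD := diag_sum Y l.+1 hY (ltn0Sn l) hdY hdd hnext.
rewrite big_nat_recl // in hD.
rewrite (eq_big_nat _ _ (F1 := fun i => hook Y i.+1 i.+1)
   (F2 := fun i => 2 * nth 0 eta (l - i))) in hD; last first.
  move=> i hi; rewrite hii; last by lia.
  rewrite /part; congr (2 * nth 0 eta _); lia.
rewrite -big_distrr /= big_nat_rev /= in hD.
rewrite (eq_big_nat _ _ (F1 := fun i => nth 0 eta (l - (1 + l.+1 - i.+1)))
   (F2 := fun i => nth 0 eta i.-1)) in hD; last first.
  move=> i hi; congr (nth 0 eta _); lia.
rewrite big_add1 /= in hD.
rewrite sum_nth_take take_size hsum h11 in hD.
have hc : col Y 1 = size Y.
  rewrite /col; apply/eqP; rewrite -all_count; apply/allP => x hx.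
  exact: (@young_pos Y _ hY hx).
have h1 := harm 1 isT.
move: h11; rewrite /hook h1 /leg hc => h11.
rewrite first_col // bin2_sum bin2 -divn2 -hD.
have -> : size Y = 2 * k - 3 by lia.
nia.
Qed.
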